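(* Let $G$ be a strategic game with players $1,\dots,n$ and let $\phi=(\phi_1,\dots,\phi_n)$ be a sequence in which each $\phi_i$ is a positive optimality condition for player $i$. Then the $\mathcal{L}_\nu$-formula $$(\mathit{rat}_\phi \wedge \Box^*\mathit{rat}_\phi)\rightarrow \nu X.\,O_\phi X$$ is a theorem of the proof system $\mathbf{P}$.
   Context: Strategic game: $G=(T_1,\dots,T_n,<_1,\dots,<_n)$ where $T_i$ is an arbitrary nonempty (possibly infinite) set of strategies of player $i$, and $<_i$ is a total linear order on $T=\prod_{i=1}^n T_i$; $\ge_i$ is its reflexive closure. For a profile $s$ write $s_{-i}$ for $(s_j)_{j\neq i}$ and $(s_i,t_{-i})$ for the profile agreeing with $t$ except in coordinate $i$, where it is $s_i$. A restriction of $G$ is $S=(S_1,\dots,S_n)$ with $S_i\subseteq T_i$. Language $\mathcal{L}_O$: first-order formulas built from atoms $C(a)$ and $a\ge^i_c b$ ($i\in[1..n]$, $a,b,c$ variables or the constant $o$) using $\neg,\wedge,\exists x$. An optimality model is $(G,G',s)$ with $G'$ a restriction and $s\in T$; an assignment $\alpha$ maps variables to $T$ and $o$ to $s$; $(G,G',s)\models_\alpha C(x)$ iff $\alpha(x)_j\in G'_j$ for all $j$; $(G,G',s)\models_\alpha x\ge^i_z y$ iff $(\alpha(x)_i,\alpha(z)_{-i})\ge_i(\alpha(y)_i,\alpha(z)_{-i})$; other connectives as usual. An optimality condition for player $i$ is a closed $\mathcal{L}_O$-formula all of whose atoms of the form $a\ge^j_c b$ have $j=i$; it is positive if every occurrence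 of an atom $C(\cdot)$ lies under an even number of negations. For $s_i\in T_i$ and restriction $S$, $\phi_i(s_i,S)$ means $(G,S,s)\models\phi_i$ for a profile $s$ with $i$-th component $s_i$ (the other components are irrelevant). Belief model for $G$: $(\Omega,\bar s_1,\dots,\bar s_n,P_1,\dots,P_n)$ with $\Omega\neq\emptyset$, $\bar s_i:\Omega\to T_i$, $P_i:\Omega\to 2^\Omega$; $\bar s(\omega)=(\bar s_1(\omega),\dots,\bar s_n(\omega))$. For $E\subseteq\Omega$, $G_E$ is the restriction with $(G_E)_i=\{\bar s_i(u):u\in E\}$. Language $\mathcal{L}_\nu$ (one set variable $X$): $\psi::=\mathit{rat}_{\phi_i}\mid X\mid \psi\wedge\psi\mid\neg\psi\mid\Box_i\psi\mid O_{\phi_i}\psi\mid\nu X.\psi$, with $\phi_i$ an optimality condition for player $i$ and, in $\nu X.\psi$, $\psi$ containing no $\nu$. Abbreviations: $\mathit{rat}_\phi=\bigwedge_i\mathit{rat}_{\phi_i}$, $\Box\psi=\bigwedge_i\Box_i\psi$, $O_\phi\psi=\bigwedge_i O_{\phi_i}\psi$, $\rightarrow$ as usual, and $\Box^*\psi:=\nu X.\Box(X\wedge\psi)$. A formula is positive in $X$ if each occurrence of $X$ is under an even number of negations and lies in the scope of $O_{\phi_i}$ only when $\phi_i$ is positive. $\psi[X\mapsto\chi]$ denotes substitution of $\chi$ for each occurrence of $X$. Proof system $\mathbf{P}$: standard propositional reasoning (all propositional tautologies and modus ponens), plus, for positive optimality conditions $\phi_i$ and $\psi$ positive in $X$: axiom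 ($\mathit{rat}Dis$): $\mathit{rat}_\phi\rightarrow(\Box\chi\rightarrow O_\phi\chi)$; axiom ($\nu Dis$): $\nu X.\psi\rightarrow\psi[X\mapsto\nu X.\psi]$; rule ($\nu Ind$): from $\chi\rightarrow\psi[X\mapsto\chi]$ infer $\chi\rightarrow\nu X.\psi$. *)

(* Defs.v *)
From Stdlib Require Import Arith List Bool.
Import ListNotations.

Definition player (n i : nat) : Prop := 1 <= i <= n.

Definition profile (n : nat) (T : nat -> Type) : Type :=
  forall i : nat, player n i -> T i.

Record game (n : nat) : Type := {
  strat : nat -> Type;
  strat_nonempty : forall i, player n i -> inhabited (strat i);
  pref : nat -> profile n strat -> profile n strat -> Prop;
  pref_irrefl : forall i, player n i -> forall s, ~ pref i s s;
  pref_trans : forall i, player n i -> forall s t u,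
      pref i s t -> pref i t u -> pref i s u;
  pref_total : forall i, player n i -> forall s t,
      s <> t -> pref i s t \/ pref i t s
}.

Inductive oterm : Type :=
| TVar (x : nat)
| TO.

Inductive oform : Type :=
| OC (a : oterm)
| OGe (i : nat) (c a b : oterm)           (* a >=^i_c b *)
| ONeg (f : oform)
| OAnd (f g : oform)
| OEx (x : nat) (f : oform).

Definition term_free (a : oterm) (x : nat) : Prop :=
  match a with TVar y => y = x | TO => False end.

Fixpoint ofree (f : oform) (x : nat) : Prop :=
  match f with
  | OC a => term_free a x
  | OGe _ c a b => term_free c x \/ term_free a x \/ term_free b x
  | ONeg g => ofree g x
  | OAnd g h => ofree g x \/ ofree h x
  | OEx y g => y <> x /\ ofree g x
  end.

Definition oclosed (f : oform) : Prop := forall x, ~ ofree f x.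

Fixpoint only_player (i : nat) (f : oform) : Prop :=
  match f with
  | OC _ => True
  | OGe j _ _ _ => j = i
  | ONeg g => only_player i g
  | OAnd g h => only_player i g /\ only_player i h
  | OEx _ g => only_player i g
  end.

Definition opt_cond (i : nat) (f : oform) : Prop := oclosed f /\ only_player i f.

(* every occurrence of C(.) lies under an even number of negations;
   pol = true means "even so far" *)
Fixpoint opos (pol : bool) (f : oform) : Prop :=
  match f with
  | OC _ => pol = true
  | OGe _ _ _ _ => True
  | ONeg g => opos (negb pol) g
  | OAnd g h => opos pol g /\ opos pol h
  | OEx _ g => opos pol g
  end.

Definition positive_cond (f : oform) : Prop := opos true f.

Inductive nform : Type :=
| Rat (i : nat) (phi : oform)
| XVar
| NAnd (a b : nform)
| NNeg (a : nform)
| NBox (i : nat) (a : nform)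
| NO (i : nat) (phi : oform) (a : nform)
| Nu (a : nform).

Fixpoint nu_free (a : nform) : Prop :=
  match a with
  | Rat _ _ | XVar => True
  | NAnd b c => nu_free b /\ nu_free c
  | NNeg b => nu_free b
  | NBox _ b => nu_free b
  | NO _ _ b => nu_free b
  | Nu _ => False
  end.

Fixpoint wf (n : nat) (a : nform) : Prop :=
  match a with
  | Rat i phi => player n i /\ opt_cond i phi
  | XVar => True
  | NAnd b c => wf n b /\ wf n c
  | NNeg b => wf n b
  | NBox i b => player n i /\ wf n b
  | NO i phi b => player n i /\ opt_cond i phi /\ wf n b
  | Nu b => nu_free b /\ wf n b
  end.

(* free occurrence of X (X is bound by nu) *)
Fixpoint hasX (a : nform) : Prop :=
  match a with
  | Rat _ _ => False
  | XVar => True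
  | NAnd b c => hasX b \/ hasX c
  | NNeg b => hasX b
  | NBox _ b => hasX b
  | NO _ _ b => hasX b
  | Nu _ => False
  end.

Fixpoint posX (pol : bool) (a : nform) : Prop :=
  match a with
  | Rat _ _ => True
  | XVar => pol = true
  | NAnd b c => posX pol b /\ posX pol c
  | NNeg b => posX (negb pol) b
  | NBox _ b => posX pol b
  | NO _ phi b => posX pol b /\ (hasX b -> positive_cond phi)
  | Nu _ => True
  end.

Definition positive_in_X (a : nform) : Prop := posX true a.

Fixpoint substX (a c : nform) : nform :=
  match a with
  | Rat i phi => Rat i phi
  | XVar => c
  | NAnd b d => NAnd (substX b c) (substX d c)
  | NNeg b => NNeg (substX b c)
  | NBox i b => NBox i (substX b c)
  | NO i phi b => NO i phi (substX b c)
  | Nu b => Nu b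
  end.

Definition NImp (a b : nform) : nform := NNeg (NAnd a (NNeg b)).

(* propositional tautologies: true under every valuation of the
   non-propositional subformulas *)
Fixpoint peval (v : nform -> bool) (a : nform) : bool :=
  match a with
  | NAnd b c => peval v b && peval v c
  | NNeg b => negb (peval v b)
  | _ => v a
  end.

Definition tautology (a : nform) : Prop := forall v, peval v a = true.

Definition ntop : nform := NNeg (NAnd XVar (NNeg XVar)).

Fixpoint bigand (l : list nform) : nform :=
  match l with
  | [] => ntop
  | [a] => a
  | a :: l' => NAnd a (bigand l')
  end.

Definition players (n : nat) : list nat := seq 1 n.

Definition rat_all (n : nat) (phi : nat -> oform) : nform :=
  bigand (map (fun i => Rat i (phi i)) (players n)).

Definition box_all (n : nat) (a : nform) : nform :=
  bigand (map (fun i => NBox i a) (players n)).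

Definition O_all (n : nat) (phi : nat -> oform) (a : nform) : nform :=
  bigand (map (fun i => NO i (phi i) a) (players n)).

Definition boxstar (n : nat) (a : nform) : nform :=
  Nu (box_all n (NAnd XVar a)).

Definition pos_conds (n : nat) (phi : nat -> oform) : Prop :=
  forall i, player n i -> opt_cond i (phi i) /\ positive_cond (phi i).

Inductive provable (n : nat) : nform -> Prop :=
| P_taut : forall a, wf n a -> tautology a -> provable n a
| P_mp : forall a b, provable n a -> provable n (NImp a b) -> provable n b
| P_ratDis : forall phi c, pos_conds n phi -> wf n c ->
    provable n (NImp (rat_all n phi) (NImp (box_all n c) (O_all n phi c)))
| P_nuDis : forall a, wf n (Nu a) -> positive_in_X a ->
    provable n (NImp (Nu a) (substX a (Nu a)))
| P_nuInd : forall a c, wf n (Nu a) -> positive_in_X a ->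
    provable n (NImp c (substX a c)) -> provable n (NImp c (Nu a)).

(* Main.v *)
Require Import Defs.
From Stdlib Require Import Arith List Bool Lia.
Import ListNotations.

Lemma wf_bigand n l : (forall x, In x l -> wf n x) -> wf n (bigand l).
Proof.
  induction l as [|a l IH]; intros H; simpl; [tauto|].
  destruct l as [|b l']; [apply H; simpl; auto|].
  split; [apply H; simpl; auto|]. apply IH; intros; apply H; simpl; auto.
Qed.

Lemma posX_bigand l : l <> [] -> (forall x, In x l -> posX true x) -> posX true (bigand l).
Proof.
  induction l as [|a l IH]; intros Hn H; [congruence|].
  destruct l as [|b l']; [apply H; simpl; auto|].
  simpl. split; [apply H; simpl; auto|]. apply IH; [congruence|].
  intros; apply H; simpl; auto.
Qed.

Lemma substX_bigand l c : l <> [] -> substX (bigand l) c = bigand (map (fun x => substX x c) l).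
Proof.
  induction l as [|a l IH]; intros Hn; [congruence|].
  destruct l as [|b l']; [reflexivity|].
  change (NAnd (substX a c) (substX (bigand (b :: l')) c) =
          bigand (substX a c :: map (fun x => substX x c) (b :: l'))).
  rewrite IH by congruence. reflexivity.
Qed.

Lemma nu_free_bigand l : (forall x, In x l -> nu_free x) -> nu_free (bigand l).
Proof.
  induction l as [|a l IH]; intros H; simpl; [tauto|].
  destruct l as [|b l']; [apply H; simpl; auto|].
  split; [apply H; simpl; auto|]. apply IH; intros; apply H; simpl; auto.
Qed.

Ltac taut_tac := let v := fresh "v" in intro v; unfold NImp; cbn [peval];
  repeat match goal with |- context[peval v ?x] => destruct (peval v x) end;
  repeat match goal with |- context[v ?x] => destruct (v x) end; reflexivity.

Lemma taut1 x y z w : tautology (NImp (NImp x y) (NImp (NImp z (NImp y w)) (NImp (NAnd x z) w))).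
Proof. intro v; unfold NImp; simpl; destruct (peval v x), (peval v y), (peval v z), (peval v w); reflexivity. Qed.

Lemma taut2 x z w : tautology (NImp (NImp (NAnd x z) w) (NImp (NAnd z x) w)).
Proof. intro v; unfold NImp; simpl; destruct (peval v x), (peval v z), (peval v w); reflexivity. Qed.

Lemma in_players n i : In i (players n) -> player n i.
Proof. unfold players, player. rewrite in_seq. lia. Qed.

Lemma players_ne n : 1 <= n -> players n <> [].
Proof. destruct n; [lia|]. unfold players; simpl; congruence. Qed.

Lemma mp2 n a b c : provable n a -> provable n b ->
  wf n (NImp a (NImp b c)) -> tautology (NImp a (NImp b c)) -> provable n c.
Proof.
  intros Ha Hb Hw Ht. eapply P_mp; [exact Hb|]. eapply P_mp; [exact Ha|].
  apply P_taut; assumption.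
Qed.

Theorem theorem1 (n : nat) (G : game n) (phi : nat -> oform) :
  pos_conds n phi ->
  provable n
    (NImp (NAnd (rat_all n phi) (boxstar n (rat_all n phi)))
          (Nu (O_all n phi XVar))).
Proof.
  intros Hp.
  set (R := rat_all n phi).
  assert (wR : wf n R).
  { apply wf_bigand. intros x Hx. apply in_map_iff in Hx.
    destruct Hx as [i [<- Hi]]. apply in_players in Hi. simpl.
    split; [exact Hi|apply Hp; exact Hi]. }
  destruct n as [|m].
  { apply P_taut.
    - simpl. cbn. repeat split; auto.
    - intro v. cbn. repeat match goal with |- context[v ?x] => destruct (v x) end; reflexivity. }
  assert (Hne : players (S m) <> []) by (apply players_ne; lia).
  set (n := S m) in *.
  set (Bb := box_all n (NAnd XVar R)).
  set (B := Nu Bb).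
  set (a := O_all n phi XVar).
  set (c := NAnd B R).
  assert (wBb : wf n Bb).
  { apply wf_bigand. intros x Hx. apply in_map_iff in Hx.
    destruct Hx as [i [<- Hi]]. apply in_players in Hi. simpl. tauto. }
  assert (nfBb : nu_free Bb).
  { apply nu_free_bigand. intros x Hx. apply in_map_iff in Hx.
    destruct Hx as [i [<- Hi]]. simpl. split; [exact I|].
    apply nu_free_bigand. intros y Hy. apply in_map_iff in Hy.
    destruct Hy as [j [<- Hj]]. exact I. }
  assert (wB : wf n B) by (simpl; tauto).
  assert (wc : wf n c) by (simpl; tauto).
  assert (substR : forall d, substX R d = R).
  { intro d. unfold R, rat_all. rewrite substX_bigand by (intro Hm; apply map_eq_nil in Hm; contradiction).
    rewrite map_map. reflexivity. }
  assert (pBb : positive_in_X Bb).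
  { apply posX_bigand; [intro Hm; apply map_eq_nil in Hm; contradiction|].
    intros x Hx. apply in_map_iff in Hx. destruct Hx as [i [<- Hi]].
    simpl. split; [reflexivity|].
    apply posX_bigand; [intro Hm; apply map_eq_nil in Hm; contradiction|].
    intros y Hy. apply in_map_iff in Hy. destruct Hy as [j [<- Hj]]. exact I. }
  assert (H1 : provable n (NImp B (box_all n c))).
  { assert (E : substX Bb B = box_all n c).
    { unfold Bb, box_all. rewrite substX_bigand by (intro Hm; apply map_eq_nil in Hm; contradiction).
      rewrite map_map. simpl. rewrite substR. reflexivity. }
    rewrite <- E. apply P_nuDis; [simpl; tauto | exact pBb]. }
  assert (wbc : wf n (box_all n c)).
  { apply wf_bigand. intros x Hx. apply in_map_iff in Hx.
    destruct Hx as [i [<- Hi]]. apply in_players in Hi. simpl. tauto. }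
  assert (wOc : wf n (O_all n phi c)).
  { apply wf_bigand. intros x Hx. apply in_map_iff in Hx.
    destruct Hx as [i [<- Hi]]. apply in_players in Hi. simpl.
    split; [exact Hi|]. split; [apply Hp; exact Hi| exact wc]. }
  assert (wa : wf n (Nu a)).
  { split.
    - apply nu_free_bigand. intros x Hx. apply in_map_iff in Hx.
      destruct Hx as [i [<- Hi]]. exact I.
    - apply wf_bigand. intros x Hx. apply in_map_iff in Hx.
      destruct Hx as [i [<- Hi]]. apply in_players in Hi. simpl.
      split; [exact Hi|]. split; [apply Hp; exact Hi| exact I]. }
  assert (pa : positive_in_X a).
  { apply posX_bigand; [intro Hm; apply map_eq_nil in Hm; contradiction|].
    intros x Hx. apply in_map_iff in Hx. destruct Hx as [i [<- Hi]].
    apply in_players in Hi. simpl. split; [reflexivity|]. intros _; apply Hp; exact Hi. }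
  assert (H2 : provable n (NImp R (NImp (box_all n c) (O_all n phi c))))
    by (apply P_ratDis; assumption).
  assert (H3 : provable n (NImp c (substX a c))).
  { assert (E : substX a c = O_all n phi c).
    { unfold a, O_all. rewrite substX_bigand by (intro Hm; apply map_eq_nil in Hm; contradiction).
      rewrite map_map. reflexivity. }
    rewrite E. eapply mp2; [exact H1|exact H2| |].
    - simpl. tauto.
    - apply taut1. }
  assert (H4 : provable n (NImp c (Nu a))) by (apply P_nuInd; assumption).
  eapply P_mp; [exact H4|]. apply P_taut.
  - change (boxstar n R) with B. clearbody a c B R. simpl in wa |- *. tauto.
  - apply taut2.
Qed.
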